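(* Let $G$ be a group, $A$ a semilattice of groups, and $\Theta=(\theta,w)$, $\Theta'=(\theta',w')$ twisted partial actions of $G$ on $A$. If $\Theta$ is equivalent to $\Theta'$, then the corresponding twisted $E(A)*_\theta G$-module structures $\Lambda=\Lambda^\Theta$ and $\Lambda'=\Lambda^{\Theta'}$ on $A$ are equivalent.
   Context: A semilattice of groups is an inverse semigroup $A$ with central idempotents; $A_e=\{a: aa^{-1}=a^{-1}a=e\}$. Multipliers of a semigroup $T$: pairs $(L,R)$ of maps $T\to T$ with $L(st)=L(s)t$, $R(st)=sR(t)$, $sL(t)=R(s)t$, written $ws=L(s)$, $sw=R(s)$; monoid $\mathcal M(T)$, unit group $\mathcal U(\mathcal M(T))$. A twisted partial action of $G$ on $A$ is $(\theta,w)$ with isomorphisms $\theta_x:D_{x^{-1}}\to D_x$ of nonempty ideals and $w_{x,y}\in\mathcal U(\mathcal M(D_xD_{xy}))$ such that (i) $D_x^2=D_x$, $D_xD_y=D_yD_x$; (ii) $D_1=A$, $\theta_1=\mathrm{id}$; (iii) $\theta_x(D_{x^{-1}}D_y)=D_xD_{xy}$; (iv) $\theta_x\theta_y(s)=w_{x,y}\theta_{xy}(s)w_{x,y}^{-1}$ on $D_{y^{-1}}D_{y^{-1}x^{-1}}$; (v) $w_{1,x}=w_{x,1}$ = identity of $D_x$; (vi) $\theta_x(sw_{y,z})w_{x,yz}=\theta_x(s)w_{x,y}w_{xy,z}$ on $D_{x^{-1}}D_yD_{yz}$. $(\theta,w)$ and $(\theta',w')$ are equivalent if $D'_x=D_x$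 and there are $\varepsilon_x\in\mathcal U(\mathcal M(D_x))$ with $\theta'_x(s)=\varepsilon_x\theta_x(s)\varepsilon_x^{-1}$ ($s\in D_{x^{-1}}$) and $\theta'_x(s)w'_{x,y}\varepsilon_{xy}=\varepsilon_x\theta_x(s\varepsilon_y)w_{x,y}$ ($s\in D_{x^{-1}}D_y$). The maps $\theta_x$ restrict to a partial action $\theta$ of $G$ on $E(A)$; equivalent twisted partial actions have the same restriction, so $E(A)*_\theta G=E(A)*_{\theta'}G=\{e\delta_x: e\in E(D_x)\}$ with product $e\delta_x\cdot f\delta_y=\theta_x(\theta_x^{-1}(e)f)\delta_{xy}$ (an $E$-unitary inverse semigroup). $\Lambda^\Theta=(\alpha,\lambda,f)$ is given by $\alpha(e\delta_1)=e$, $\lambda_{e\delta_x}(a)=\theta_x(\theta_x^{-1}(e)a)$, $f(e\delta_x,e'\delta_y)=\theta_x(\theta_x^{-1}(e)e')w_{x,y}$ (and similarly for $\Theta'$). Two twisted module structures $(\alpha,\lambda,f)$, $(\alpha',\lambda',f')$ over an inverse semigroup $S$ are equivalent if $\alpha'=\alpha$ and there is $g:S\to A$ with $g(s)\in A_{\alpha(ss^{-1})}$, $\lambda'_s(a)=g(s)\lambda_s(a)g(s)^{-1}$ and $f'(s,t)g(st)=g(s)\lambda_s(g(t))f(s,t)$. *)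

(* Defs.v *)
Set Implicit Arguments.
Unset Strict Implicit.

Record Group := {
  gcar :> Type;
  gmul : gcar -> gcar -> gcar;
  g1 : gcar;
  ginv : gcar -> gcar;
  gmulA : forall x y z, gmul x (gmul y z) = gmul (gmul x y) z;
  gmul1l : forall x, gmul g1 x = x;
  gmul1r : forall x, gmul x g1 = x;
  gmulVl : forall x, gmul (ginv x) x = g1;
  gmulVr : forall x, gmul x (ginv x) = g1 }.

(* ---------- semilattices of groups ----------
   An inverse semigroup (every a has a unique b with aba = a, bab = b,
   written sinv a) whose idempotents are central. *)
Record SLG := {
  scar :> Type;
  smul : scar -> scar -> scar;
  sinv : scar -> scar;
  smulA : forall a b c, smul a (smul b c) = smul (smul a b) c;
  sinv_l : forall a, smul (smul a (sinv a)) a = a;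
  sinv_r : forall a, smul (smul (sinv a) a) (sinv a) = sinv a;
  sinv_uniq : forall a b, smul (smul a b) a = a -> smul (smul b a) b = b -> b = sinv a;
  idem_central : forall e a, smul e e = e -> smul e a = smul a e }.

Section Sets.
Variable A : SLG.

Definition setprod (P Q : A -> Prop) : A -> Prop :=
  fun a => exists p q, P p /\ Q q /\ a = smul p q.

Definition set_eq (P Q : A -> Prop) : Prop := forall a, P a <-> Q a.

Definition nonempty_ideal (P : A -> Prop) : Prop :=
  (exists a, P a) /\ (forall a b, P a -> P (smul a b) /\ P (smul b a)).

Definition inAe (e a : A) : Prop := smul a (sinv a) = e /\ smul (sinv a) a = e.

(* (L,R) is a multiplier of T  (ws = L s, sw = R s), maps T -> T *)
Definition is_mult (T : A -> Prop) (L R : A -> A) : Prop :=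
  (forall s, T s -> T (L s)) /\ (forall s, T s -> T (R s)) /\
  (forall s t, T s -> T t -> L (smul s t) = smul (L s) t) /\
  (forall s t, T s -> T t -> R (smul s t) = smul s (R t)) /\
  (forall s t, T s -> T t -> smul s (L t) = smul (R s) t).
End Sets.

(* An element of the unit group U(M(T)): a multiplier (mL,mR) together with
   its inverse (mLi,mRi).  Product in M(T): (w w') s = w (w' s),
   s (w w') = (s w) w'. *)
Record UMult (A : SLG) (T : A -> Prop) := {
  mL : A -> A; mR : A -> A; mLi : A -> A; mRi : A -> A;
  m_mult : is_mult T mL mR;
  mi_mult : is_mult T mLi mRi;
  mLK : forall t, T t -> mL (mLi t) = t;
  mLiK : forall t, T t -> mLi (mL t) = t;
  mRK : forall t, T t -> mR (mRi t) = t;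
  mRiK : forall t, T t -> mRi (mR t) = t }.

(* ---------- twisted partial actions ----------
   theta x : D_{x^-1} -> D_x is an isomorphism, given together with its
   inverse map thi x : D_x -> D_{x^-1}; values outside the domains are
   irrelevant. *)
Record TPA (G : Group) (A : SLG) := {
  D : G -> A -> Prop;
  th : G -> A -> A;
  thi : G -> A -> A;
  w : forall x y : G, UMult (setprod (D x) (D (gmul x y)));
  D_ideal : forall x, nonempty_ideal (D x);
  th_into : forall x s, D (ginv x) s -> D x (th x s);
  th_mul : forall x s t, D (ginv x) s -> D (ginv x) t ->
             th x (smul s t) = smul (th x s) (th x t);
  thi_into : forall x a, D x a -> D (ginv x) (thi x a);
  th_thi : forall x a, D x a -> th x (thi x a) = a;
  thi_th : forall x s, D (ginv x) s -> thi x (th x s) = s;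
  D_sq : forall x, set_eq (setprod (D x) (D x)) (D x);
  D_comm : forall x y, set_eq (setprod (D x) (D y)) (setprod (D y) (D x));
  D_1 : forall a, D (g1 G) a;
  th_1 : forall a, th (g1 G) a = a;
  th_image : forall x y b,
    (exists s, setprod (D (ginv x)) (D y) s /\ th x s = b) <->
    setprod (D x) (D (gmul x y)) b;
  (* (iv)  theta_x theta_y (s) = w_{x,y} theta_{xy}(s) w_{x,y}^{-1} *)
  th_comp : forall x y s,
    setprod (D (ginv y)) (D (gmul (ginv y) (ginv x))) s ->
    th x (th y s) = mRi (w x y) (mL (w x y) (th (gmul x y) s));
  w_1l : forall x s, D x s -> mL (w (g1 G) x) s = s /\ mR (w (g1 G) x) s = s;
  w_1r : forall x s, D x s -> mL (w x (g1 G)) s = s /\ mR (w x (g1 G)) s = s;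
  w_cocycle : forall x y z s,
    setprod (setprod (D (ginv x)) (D y)) (D (gmul y z)) s ->
    mR (w x (gmul y z)) (th x (mR (w y z) s)) =
    mR (w (gmul x y) z) (mR (w x y) (th x s)) }.

Definition TPA_equiv (G : Group) (A : SLG) (T T' : TPA G A) : Prop :=
  (forall x a, D T' x a <-> D T x a) /\
  exists eps : forall x : G, UMult (D T x),
    (forall x s, D T (ginv x) s ->
       th T' x s = mRi (eps x) (mL (eps x) (th T x s))) /\
    (forall x y s, setprod (D T (ginv x)) (D T y) s ->
       mR (eps (gmul x y)) (mR (w T' x y) (th T' x s)) =
       mL (eps x) (mR (w T x y) (th T x (mR (eps y) s)))).

(* ---------- E(A) *_theta G ----------
   Elements e delta_x are encoded as pairs (e, x) : A * G with
   e idempotent and e in D_x. *)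
Section Crossed.
Variables (G : Group) (A : SLG) (T : TPA G A).

Definition inS (p : A * G) : Prop := smul (fst p) (fst p) = fst p /\ D T (snd p) (fst p).

Definition mulS (p q : A * G) : A * G :=
  (th T (snd p) (smul (thi T (snd p) (fst p)) (fst q)), gmul (snd p) (snd q)).

Definition invS (p : A * G) : A * G := (thi T (snd p) (fst p), ginv (snd p)).

(* Lambda^Theta = (alpha, lambda, f) *)
Definition alphaS (p : A * G) : A := fst p.
Definition lamS (p : A * G) (a : A) : A :=
  th T (snd p) (smul (thi T (snd p) (fst p)) a).
Definition fS (p q : A * G) : A :=
  mR (w T (snd p) (snd q)) (th T (snd p) (smul (thi T (snd p) (fst p)) (fst q))).
End Crossed.

(* ---------- equivalence of twisted module structures ----------
   over an inverse semigroup S presented as a carrier type St with a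
   membership predicate inSt and operations mulSt, invSt. *)
Definition TMS_equiv (A : SLG) (St : Type) (inSt : St -> Prop)
  (mulSt : St -> St -> St) (invSt : St -> St)
  (alpha : St -> A) (lam : St -> A -> A) (f : St -> St -> A)
  (alpha' : St -> A) (lam' : St -> A -> A) (f' : St -> St -> A) : Prop :=
  (forall e, inSt e -> mulSt e e = e -> alpha' e = alpha e) /\
  exists g : St -> A,
    (forall s, inSt s -> inAe (alpha (mulSt s (invSt s))) (g s)) /\
    (forall s a, inSt s -> lam' s a = smul (smul (g s) (lam s a)) (sinv (g s))) /\
    (forall s t, inSt s -> inSt t ->
       smul (f' s t) (g (mulSt s t)) = smul (smul (g s) (lam s (g t))) (f s t)).

(* Main.v *)
Require Import Defs.
From Stdlib Require Import Setoid.

Lemma idl_l (A : SLG) (P : A -> Prop) a b : nonempty_ideal P -> P a -> P (smul a b).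
Proof. intros [_ H] Ha. exact (proj1 (H a b Ha)). Qed.
Lemma idl_r (A : SLG) (P : A -> Prop) a b : nonempty_ideal P -> P b -> P (smul a b).
Proof. intros [_ H] Hb. exact (proj2 (H b a Hb)). Qed.

Lemma mult_idem (A : SLG) (T : A -> Prop) L R e :
  is_mult T L R -> T e -> smul e e = e ->
  L e = R e /\ smul (L e) e = L e /\ smul e (L e) = L e.
Proof.
  intros [HL [HR [HLm [HRm HLR]]]] Te He.
  assert (h1 : L e = smul (L e) e) by (rewrite <- HLm by auto; rewrite He; auto).
  assert (h2 : smul e (L e) = smul (L e) e) by (apply idem_central; auto).
  assert (h3 : smul e (L e) = smul (R e) e) by auto.
  assert (h4 : smul e (R e) = smul (R e) e) by (apply idem_central; auto).
  assert (h5 : R e = smul e (R e)) by (rewrite <- HRm by auto; rewrite He; auto).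
  split; [|split]; congruence.
Qed.

Lemma umult_facts (A : SLG) (T : A -> Prop) (W : UMult T) e :
  T e -> smul e e = e ->
  mRi W (mL W e) = e /\ mLi W e = mRi W e /\
  smul (mL W e) (mLi W e) = e /\ smul (mLi W e) (mL W e) = e /\
  sinv (mL W e) = mLi W e.
Proof.
  intros Te He.
  destruct (mult_idem _ _ _ _ _ (m_mult W) Te He) as [a1 [a2 a3]].
  destruct (mult_idem _ _ _ _ _ (mi_mult W) Te He) as [b1 [b2 b3]].
  pose proof (m_mult W) as [HL [HR [HLm [HRm HLR]]]].
  pose proof (mi_mult W) as [HLi [HRi [HLmi [HRmi HLRi]]]].
  assert (c1 : mRi W (mL W e) = e) by (rewrite a1; apply mRiK; auto).
  assert (c2 : smul (mL W e) (mLi W e) = e).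
  { rewrite HLRi by auto. rewrite c1. auto. }
  assert (c3 : smul (mLi W e) (mL W e) = e).
  { rewrite HLR by (auto; rewrite b1; auto). rewrite b1, mRK by auto. auto. }
  split; [|split; [|split; [|split]]]; auto.
  symmetry. apply sinv_uniq.
  - rewrite c2. rewrite idem_central by auto. auto.
  - rewrite c3. auto.
Qed.

Lemma Rid (A : SLG) (T : A -> Prop) (W : UMult T) e f :
  T f -> T (smul e f) -> smul f f = f ->
  mR W (smul e f) = smul e (mL W f).
Proof.
  intros Tf Tef Hf.
  destruct (mult_idem _ _ _ _ _ (m_mult W) Tf Hf) as [a1 [a2 a3]].
  pose proof (m_mult W) as [HL [HR [HLm [HRm HLR]]]].
  assert (E : smul e f = smul (smul e f) f) by (rewrite <- smulA, Hf; auto).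
  rewrite E at 1. rewrite HRm by auto. rewrite <- a1. rewrite <- smulA, a3. auto.
Qed.

Theorem proposition8p2 (G : Group) (A : SLG) (T T' : TPA G A) :
  TPA_equiv T T' ->
  TMS_equiv (inS T) (mulS T) (invS T)
    (@alphaS G A) (lamS T) (fS T)
    (@alphaS G A) (lamS T') (fS T').
Proof.
  intros [HD [eps [Heps1 Heps2]]].
  assert (thi'E : forall x e, D T x e -> smul e e = e -> thi T' x e = thi T x e).
  { intros x e Hx He.
    assert (H1 : th T' x (thi T x e) = e).
    { rewrite Heps1 by (apply thi_into; auto). rewrite th_thi by auto.
      apply (umult_facts _ _ (eps x) _ Hx He). }
    rewrite <- H1 at 1. apply thi_th. apply HD. apply thi_into; auto. }
  assert (thiid : forall x e, D T x e -> smul e e = e ->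
             smul (thi T x e) (thi T x e) = thi T x e).
  { intros x e Hx He.
    rewrite <- (@thi_th _ _ T x (smul (thi T x e) (thi T x e)))
      by (apply idl_l; [apply D_ideal| apply thi_into; auto]).
    rewrite th_mul by (apply thi_into; auto). rewrite th_thi by auto.
    rewrite He. auto. }
  assert (absorb : forall x e a, D T x e -> smul e e = e ->
     D T (ginv x) (smul (thi T x e) a) ->
     smul e (th T x (smul (thi T x e) a)) = th T x (smul (thi T x e) a)).
  { intros x e a Hx He Ha.
    rewrite <- (@th_thi _ _ T x e Hx) at 1.
    rewrite <- th_mul by (try apply idl_l; try apply D_ideal; apply thi_into; auto).
    rewrite smulA, thiid by auto. auto. }
  assert (sp_l : forall x y a, setprod (D T x) (D T (gmul x y)) a -> D T x a).
  { intros x y a [p [q [Hp [Hq ->]]]]. apply idl_l; auto. apply D_ideal. }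
  assert (sp_r : forall x y a, setprod (D T x) (D T (gmul x y)) a -> D T (gmul x y) a).
  { intros x y a [p [q [Hp [Hq ->]]]]. apply idl_r; auto. apply D_ideal. }
  split.
  { intros; reflexivity. }
  exists (fun p => mL (eps (snd p)) (fst p)).
  split; [|split].
  - intros [e x] [He Hx]. unfold mulS, invS, alphaS; simpl in *.
    rewrite thiid, th_thi by auto.
    destruct (umult_facts _ _ (eps x) _ Hx He) as [_ [_ [c2 [c3 c4]]]].
    unfold inAe. rewrite c4. auto.
  - intros [e x] a [He Hx]. unfold lamS; simpl in *.
    rewrite thi'E by auto.
    assert (He' : D T (ginv x) (thi T x e)) by (apply thi_into; auto).
    assert (Hu : D T (ginv x) (smul (thi T x e) a)) by (apply idl_l; auto; apply D_ideal).
    rewrite Heps1 by auto.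
    set (c := th T x (smul (thi T x e) a)).
    assert (Hc : D T x c) by (apply th_into; auto).
    assert (Hec : smul e c = c) by (apply absorb; auto).
    assert (Hce : smul c e = c) by (rewrite <- idem_central by auto; auto).
    destruct (umult_facts _ _ (eps x) _ Hx He) as [_ [c1 [_ [_ c4]]]].
    rewrite c4, c1.
    pose proof (m_mult (eps x)) as [HL [HR [HLm [HRm HLR]]]].
    pose proof (mi_mult (eps x)) as [HLi [HRi [HLmi [HRmi HLRi]]]].
    assert (E1 : mL (eps x) c = smul (mL (eps x) e) c)
      by (rewrite <- HLm by auto; rewrite Hec; auto).
    rewrite E1. rewrite HRmi by auto.
    replace (mRi (eps x) c) with (smul c (mRi (eps x) e))
      by (rewrite <- HRmi by auto; rewrite Hce; auto).
    apply smulA.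
  - intros [e x] [f y] [He Hx] [Hf Hy]. unfold fS, lamS, mulS; simpl in *.
    rewrite thi'E by auto.
    set (e' := thi T x e).
    assert (He' : D T (ginv x) e') by (apply thi_into; auto).
    assert (He'e' : smul e' e' = e') by (apply thiid; auto).
    assert (Hsp : setprod (D T (ginv x)) (D T y) (smul e' f)) by
      (exists e', f; auto).
    assert (Hsp' : setprod (D T' (ginv x)) (D T' y) (smul e' f)) by
      (exists e', f; repeat split; try apply HD; auto).
    assert (Hs0 : D T (ginv x) (smul e' f)) by (apply idl_l; auto; apply D_ideal).
    set (h := th T x (smul e' f)).
    assert (Hh : setprod (D T x) (D T (gmul x y)) h)
      by (apply (th_image T x y); exists (smul e' f); auto).
    assert (Hhh : smul h h = h).
    { unfold h. rewrite <- th_mul by auto. f_equal.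
      rewrite <- smulA, (smulA f e' f), <- (@idem_central _ e' f) by auto.
      rewrite <- smulA, Hf, smulA, He'e'. auto. }
    set (s1 := mR (w T' x y) (th T' x (smul e' f))).
    assert (Hs1 : D T (gmul x y) s1).
    { assert (Hb : setprod (D T' x) (D T' (gmul x y)) (th T' x (smul e' f)))
        by (apply (th_image T' x y); exists (smul e' f); auto).
      pose proof (m_mult (w T' x y)) as [_ [HRw _]].
      destruct (HRw _ Hb) as [p [q [Hp [Hq Hpq]]]].
      unfold s1; rewrite Hpq. apply idl_r; [apply D_ideal|]. apply HD; auto. }
    pose proof (m_mult (eps (gmul x y))) as [_ [_ [_ [_ HLRxy]]]].
    rewrite HLRxy by auto.
    unfold s1. rewrite Heps2 by auto.
    rewrite (Rid _ _ (eps y)) by (auto; apply idl_r; auto; apply D_ideal).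
    set (k := th T x (smul e' (mL (eps y) f))).
    pose proof (m_mult (eps y)) as [HLy _].
    assert (Hs2 : D T (ginv x) (smul e' (mL (eps y) f))) by
      (apply idl_l; auto; apply D_ideal).
    assert (Hk : setprod (D T x) (D T (gmul x y)) k).
    { apply (th_image T x y). exists (smul e' (mL (eps y) f)). split; auto.
      exists e', (mL (eps y) f); auto. }
    assert (Hek : smul e k = k) by (apply absorb; auto).
    pose proof (m_mult (eps x)) as [HL [HR [HLm [HRm HLR]]]].
    pose proof (m_mult (w T x y)) as [HLw [HRw [HLmw [HRmw HLRw]]]].
    assert (Hkx : D T x k) by eauto.
    assert (Hhx : D T x h) by eauto.
    rewrite <- (HLm e k) by auto. rewrite Hek.
    assert (HRh : D T x (mR (w T x y) h)) by (eapply sp_l; eauto).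
    rewrite <- (HLm k (mR (w T x y) h)) by auto.
    destruct (mult_idem _ _ _ _ _ (m_mult (w T x y)) Hh Hhh) as [w1 _].
    rewrite <- w1, HLRw by auto.
    assert (HRk : D T x (mR (w T x y) k)) by (eapply sp_l; eauto).
    rewrite HLm by auto. reflexivity.
Qed.
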